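(* Let $X$ be a metrizable space which is locally compact and $\sigma$-compact, let $G$ be a group and $\varphi\colon G\times X\to X$ an action (continuity is not required). The following are equivalent: (1) $\varphi$ is metric-independent expansive (MIE); (2) $\varphi$ is expansively extendible at a point; (3) $\varphi$ is cocompactly expansive.
   Context: Write $g\cdot x=\varphi(g,x)$. For a metric $d$ on $X$, the action is expansive with respect to $d$ if there is $c>0$ such that for all $x\neq y$ there is $g\in G$ with $d(g\cdot x,g\cdot y)>c$; it is MIE if it is expansive with respect to every metric compatible with the topology. For a family $\mathcal U$ of subsets and a set $A$, $A\prec\mathcal U$ means $A\subseteq U$ for some $U\in\mathcal U$. An action of $G$ on a space $Z$ is expansive by coverings if there is a finite open cover $\mathcal U$ of $Z$ such that $\{g\cdot x,g\cdot y\}\prec\mathcal U$ for all $g\in G$ implies $x=y$. The action $\varphi$ is expansively extendible at a point if, with $X'=X\cup\{p\}$ the one-point (Alexandroff) compactification of $X$, the action $\varphi'$ of $G$ on $X'$ defined by $\varphi'|_{G\times X}=\varphi$ and $g\cdot p=p$ for all $g\in G$ is expansive by coverings. The action is cocompactly expansive if there exist a finite open cover $\mathcal U$ of $X$ and a compact $K\subseteq X$ such that (i) $G\cdot K=X$ and (ii) whenever $\{g\cdot x,g\cdot y\}\prec\mathcal U\cup\{X\setminus K\}$ for every $g\in G$, then $x=y$. *)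

(* Defs.v *)
From HB Require Import structures.
From mathcomp Require Import all_boot all_order all_algebra.
From mathcomp Require Import monoid.
From mathcomp Require Import all_classical all_reals all_analysis.
Set Implicit Arguments. Unset Strict Implicit. Unset Printing Implicit Defensive.
Import Order.TTheory GRing.Theory Num.Theory.
Local Open Scope classical_set_scope.
Local Open Scope ring_scope.

Definition is_action (G : groupType) (X : Type) (phi : G -> X -> X) :=
  (forall x, phi 1%g x = x) /\ (forall g h x, phi (g * h)%g x = phi g (phi h x)).

Definition is_metric (R : realType) (X : Type) (d : X -> X -> R) :=
  [/\ forall x y, 0 <= d x y,
      forall x y, d x y = 0 <-> x = y,
      forall x y, d x y = d y x &
      forall x y z, d x z <= d x y + d y z].

Definition dball (R : realType) (X : Type) (d : X -> X -> R) (x : X) (e : R) :=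
  [set y | d x y < e].

Definition compatible_metric (R : realType) (X : topologicalType)
    (d : X -> X -> R) :=
  is_metric d /\
  forall A : set X, open A <->
    (forall x, A x -> exists2 e : R, 0 < e & dball d x e `<=` A).

Definition metrizable (R : realType) (X : topologicalType) :=
  exists d : X -> X -> R, compatible_metric d.

Definition sigma_compact (X : topologicalType) :=
  exists K : nat -> set X, (forall n, compact (K n)) /\ \bigcup_n K n = setT.

Definition expansive_wrt (R : realType) (G X : Type) (phi : G -> X -> X)
    (d : X -> X -> R) :=
  exists2 c : R, 0 < c &
    forall x y, x <> y -> exists g, c < d (phi g x) (phi g y).

Definition MIE (R : realType) (G : Type) (X : topologicalType)
    (phi : G -> X -> X) :=
  forall d : X -> X -> R, compatible_metric d -> expansive_wrt phi d.

Definition finite_open_cover (Z : topologicalType) (n : nat)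
    (U : 'I_n -> set Z) :=
  (forall i, open (U i)) /\ (forall z, exists i, U i z).

Definition prec2 (Z : Type) (n : nat) (U : 'I_n -> set Z) (a b : Z) :=
  exists i, [set a; b] `<=` U i.

Definition expansive_by_coverings (G : Type) (Z : topologicalType)
    (psi : G -> Z -> Z) :=
  exists n (U : 'I_n -> set Z), finite_open_cover U /\
    forall x y, (forall g, prec2 U (psi g x) (psi g y)) -> x = y.

Definition opc_action (G : Type) (X : topologicalType) (phi : G -> X -> X)
    (g : G) (x : one_point_compactification X) : one_point_compactification X :=
  match x with Some x' => Some (phi g x') | None => None end.

Definition expansively_extendible (G : Type) (X : topologicalType)
    (phi : G -> X -> X) :=
  expansive_by_coverings (opc_action phi).

Definition cocompactly_expansive (G : Type) (X : topologicalType)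
    (phi : G -> X -> X) :=
  exists n (U : 'I_n -> set X) (K : set X),
    [/\ finite_open_cover U, compact K,
        (forall x, exists g k, K k /\ phi g k = x) &
        forall x y,
          (forall g, prec2 U (phi g x) (phi g y) \/
                     [set phi g x; phi g y] `<=` ~` K) -> x = y].

(* Main.v *)
Set Warnings "-all".
Require Import Defs.
From HB Require Import structures.
From mathcomp Require Import all_boot all_order all_algebra.
From mathcomp Require Import monoid finmap.
From mathcomp Require Import all_classical all_reals all_analysis.
From mathcomp Require Import ring lra.
Import Order.TTheory GRing.Theory Num.Theory.
Import numFieldNormedType.Exports.
Local Open Scope classical_set_scope.
Local Open Scope ring_scope.

Section metric_facts.
Context {R : realType} {X : topologicalType} (d : X -> X -> R).
Hypothesis Hd : compatible_metric d.

Lemma cm_ge0 x y : 0 <= d x y.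
Proof. by case: Hd => -[]. Qed.
Lemma cm_eq0 x y : d x y = 0 <-> x = y.
Proof. by case: Hd => -[]. Qed.
Lemma cm_sym x y : d x y = d y x.
Proof. by case: Hd => -[]. Qed.
Lemma cm_tri x y z : d x z <= d x y + d y z.
Proof. by case: Hd => -[]. Qed.
Lemma cm_xx x : d x x = 0.
Proof. exact/cm_eq0. Qed.

Lemma dball_open x e : open (dball d x e).
Proof.
case: Hd => _ /(_ (dball d x e)) [_ H]; apply: H => y dxy.
exists (e - d x y); first by rewrite subr_gt0.
move=> z; rewrite /dball /= => dyz.
by apply: (le_lt_trans (cm_tri x y z)); rewrite -ltrBrDl.
Qed.

Lemma dball_nbhs x e : 0 < e -> nbhs x (dball d x e).
Proof.
move=> e0; apply: open_nbhs_nbhs; split; first exact: dball_open.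
by rewrite /dball /= cm_xx.
Qed.

Lemma nbhs_dball x A : nbhs x A -> exists2 e, 0 < e & dball d x e `<=` A.
Proof.
rewrite nbhsE => -[B [oB Bx] BA].
case: Hd => _ /(_ B) [/(_ oB) /(_ x Bx) [e e0 eB] _].
by exists e => // z /eB /BA.
Qed.

Lemma cm_hausdorff : hausdorff_space X.
Proof.
move=> p q clpq; apply: contrapT => npq.
have e0 : 0 < d p q.
  by rewrite lt_neqAle cm_ge0 andbT; apply/eqP => /esym /cm_eq0.
have e2 : 0 < d p q / 2 by rewrite divr_gt0.
have [z [pz qz]] := clpq _ _ (dball_nbhs p _ e2) (dball_nbhs q _ e2).
move: pz qz; rewrite /dball /= => pz qz.
have := cm_tri p z q; rewrite (cm_sym z q).
have := ltrD pz qz; rewrite -splitr => h1 h2.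
by have := lt_le_trans h1 h2; rewrite ltxx.
Qed.

End metric_facts.
Section opc_facts.
Context {X : topologicalType}.
Local Notation opc := (one_point_compactification X).

Lemma opc_open_preimage (V : set opc) : open V -> open (Some @^-1` V).
Proof.
by move=> oV; move: (one_point_compactification_some_continuous (X:=X)) => /continuousP; apply.
Qed.

Lemma opc_compact_preimage (B : set opc) :
  compact B -> ~ B None -> compact (Some @^-1` B).
Proof.
move=> cB nBN F PF FB.
have PG : ProperFilter (Some @ F) by exact: fmap_proper_filter.
have [[z|] [Bz clz]] := cB _ PG FB; last by [].
exists z; split => // A W FA Wz.
have [w [[a Aa aw] [b Wb bw]]] := clz (Some @` A) (Some @` W)
  (filterS (fun y Ay => ex_intro2 _ _ y Ay erefl) FA)
  (@one_point_compactification_some_nbhs X _ _ Wz).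
exists a; split => //; move: bw; rewrite -aw => -[<-] //.
Qed.

Lemma opc_closed_compact (B : set opc) : closed B -> compact B.
Proof.
move=> cB; apply: (subclosed_compact cB (one_point_compactification_compact (X:=X))).
by [].
Qed.

End opc_facts.

Section exhaustion.
Context {R : realType} {X : topologicalType}.
Hypothesis Hh : hausdorff_space X.
Hypothesis Hlc : locally_compact [set: X].
Variable K : nat -> set X.
Hypothesis cK : forall n, compact (K n).
Local Notation opc := (one_point_compactification X).

Let opc_haus : hausdorff_space opc.
Proof. exact: one_point_compactification_hausdorff. Qed.

Let sepn n : uniform_separator [set (None : opc)] (Some @` K n : set opc).
Proof.
apply: normal_uniform_separator.
- apply: compact_normal => //; exact: one_point_compactification_compact.
- exact/accessible_closed_set1/hausdorff_accessible.
- apply: compact_closed => //; apply: continuous_compact => //.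
  apply: continuous_subspaceT => x.
  exact: one_point_compactification_some_continuous.
- by apply/seteqP; split => // z [-> [y _]].
Qed.

Definition uf n : opc -> R := Urysohn [set (None : opc)] (Some @` K n).

Lemma uf_cont n : continuous (uf n).
Proof. exact: (@Urysohn_continuous opc R). Qed.

Lemma uf_range n z : 0 <= uf n z <= 1.
Proof.
have := @Urysohn_range opc R [set (None : opc)] (Some @` K n) (uf n z).
by move=> /(_ (ex_intro2 _ _ z I erefl)); rewrite /= in_itv.
Qed.

Lemma uf_None n : uf n None = 0.
Proof. by apply: (Urysohn_sub0 (sepn n)); exists None. Qed.

Lemma uf_K n x : K n x -> uf n (Some x) = 1.
Proof. by move=> Kx; apply: (Urysohn_sub1 (sepn n)); exists (Some x) => //; exists x. Qed.

Definition vf n (x : X) : R := uf n (Some x) / (n.+1)%:R.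

Lemma vf_ge0 n x : 0 <= vf n x.
Proof. by rewrite /vf divr_ge0 //; case/andP: (uf_range n (Some x)). Qed.

Lemma vf_le n x : vf n x <= 1 / (n.+1)%:R.
Proof.
rewrite /vf ler_pM2r ?invr_gt0 ?ltr0Sn //.
by case/andP: (uf_range n (Some x)).
Qed.

Lemma inv_Sn_gt0 n : 0 < ((n.+1)%:R : R)^-1.
Proof. by rewrite invr_gt0 ltr0Sn. Qed.
Lemma inv_Sn_le1 n : ((n.+1)%:R : R)^-1 <= 1.
Proof. by rewrite invf_le1 ?ltr0Sn // ler1n. Qed.

Lemma vf_dist n x y : `|vf n x - vf n y| <= `|uf n (Some x) - uf n (Some y)|.
Proof.
rewrite /vf -mulrBl normrM (gtr0_norm (inv_Sn_gt0 n)).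
exact: ler_piMr (normr_ge0 _) (inv_Sn_le1 n).
Qed.

Definition ff (x : X) : R := sup (range (vf ^~ x)).

Lemma ff_hs x : has_sup (range (vf ^~ x)).
Proof.
split; first by exists (vf 0 x), 0%N.
exists 1 => _ [n _ <-]; apply: (le_trans (vf_le n x)).
by rewrite mul1r invf_le1 ?ltr0Sn // ler1n.
Qed.

Lemma vf_le_ff n x : vf n x <= ff x.
Proof. by apply: sup_upper_bound; [exact: ff_hs | exists n]. Qed.

Lemma ff_le x b : (forall n, vf n x <= b) -> ff x <= b.
Proof.
move=> H; apply: ge_sup; first by exists (vf 0 x), 0%N.
by move=> _ [n _ <-].
Qed.

Lemma ff_ge0 x : 0 <= ff x.
Proof. exact: le_trans (vf_ge0 0 x) (vf_le_ff 0 x). Qed.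

Hypothesis covK : forall x, exists n, K n x.

Lemma ff_gt0 x : 0 < ff x.
Proof.
have [n Kx] := covK x; apply: (lt_le_trans _ (vf_le_ff n x)).
by rewrite /vf uf_K // mul1r invr_gt0 ltr0Sn.
Qed.

Lemma vf_near n x e : 0 < e -> \forall t \near x, `|vf n x - vf n t| < e.
Proof.
move=> e0.
have hc : {for x, continuous (uf n \o Some)}.
  apply: continuous_comp; first exact: one_point_compactification_some_continuous.
  exact: uf_cont.
move/cvgrPdist_lt : hc => /(_ e e0); apply: filterS => t /= h.
exact: le_lt_trans (vf_dist n x t) h.
Qed.

Lemma vf_near_all m x e : 0 < e ->
  \forall t \near x, forall n, (n < m)%N -> `|vf n x - vf n t| < e.
Proof.
move=> e0; elim: m => [|m IH].
  by apply: nearW => t n; rewrite ltn0.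
apply: (@filterS2 _ _ _ _ _ _ _ IH (vf_near m x e e0)) => t H1 H2 n.
rewrite ltnS leq_eqVlt => /orP [/eqP -> //|nm]; exact: H1.
Qed.

Lemma tail_small e (N n : nat) : 0 < e -> 2 / e < N%:R -> (N <= n)%N ->
  ((n.+1)%:R : R)^-1 < e / 2.
Proof.
move=> e0 HN Nn.
have h1 : 2 / e < (n.+1)%:R.
  apply: (lt_le_trans HN); rewrite ler_nat; exact: leqW.
move: h1; rewrite ltr_pdivrMr // => h1.
have m0 : (0 : R) < (n.+1)%:R by rewrite ltr0Sn.
rewrite -[_^-1]mul1r ltr_pdivrMr //.
nra.
Qed.

Lemma aux_le (a b c d : R) : 0 <= d -> a <= b -> b < c -> a <= d + c.
Proof. lra. Qed.

Lemma ff_cont : continuous ff.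
Proof.
move=> x; apply/cvgrPdist_lt => e e0.
have e20 : 0 < e / 2 by rewrite divr_gt0.
pose N := Num.Def.archi_bound (2 / e).
have HN : 2 / e < N%:R by apply: archi_boundP; rewrite ltW // divr_gt0.
apply: filterS (vf_near_all N x (e/2) e20) => t H.
have h1 : ff t <= ff x + e / 2.
  apply: ff_le => n; case: (ltnP n N) => [nN|Nn].
    move: (H n nN); rewrite ltr_norml => /andP [a b].
    have := vf_le_ff n x; lra.
  have := tail_small _ _ _ e0 HN Nn; have := vf_le n t; have := ff_ge0 x.
  rewrite mul1r; exact: aux_le.
have h2 : ff x <= ff t + e / 2.
  apply: ff_le => n; case: (ltnP n N) => [nN|Nn].
    move: (H n nN); rewrite ltr_norml => /andP [a b].
    have := vf_le_ff n t; lra.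
  have := tail_small _ _ _ e0 HN Nn; have := vf_le n x; have := ff_ge0 t.
  rewrite mul1r; exact: aux_le.
rewrite ltr_norml; apply/andP; split; lra.
Qed.

Lemma ff_compact e : 0 < e -> compact [set x | e <= ff x].
Proof.
move=> e0.
have e20 : 0 < e / 2 by rewrite divr_gt0.
pose N := Num.Def.archi_bound (2 / e).
have HN : 2 / e < N%:R by apply: archi_boundP; rewrite ltW // divr_gt0.
pose W m := [set x | exists2 n, (n < m)%N & e / 2 <= uf n (Some x)].
have cC n : compact (Some @^-1` [set z : opc | e / 2 <= uf n z]).
  apply: opc_compact_preimage.
    apply: (subclosed_compact _ (one_point_compactification_compact (X:=X))) => //.
    have h := proj1 (continuous_closedP (uf n)) (uf_cont n) _ (@closed_ge R (e/2)).
    exact: h.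
  by rewrite /= uf_None; apply/negP; rewrite -ltNge.
have cW m : compact (W m).
  elim: m => [|m IH].
    by rewrite (_ : W 0%N = set0); [exact: compact0|apply/seteqP; split => x //= [n]].
  rewrite (_ : W m.+1 = W m `|` (Some @^-1` [set z : opc | e / 2 <= uf m z])).
    exact: compactU.
  apply/seteqP; split => x /=.
    move=> [k]; rewrite ltnS leq_eqVlt => /orP [/eqP -> h|km h]; first by right.
    by left; exists k.
  by move=> [[k km h]|h]; [exists k => //; exact: ltnW|exists m].
apply: (subclosed_compact _ (cW N)).
  exact: (proj1 (continuous_closedP _) ff_cont _ (@closed_ge R e)).
move=> x /= ex.
have [_ [n _ <-] lt] : exists2 y, range (vf ^~ x) y & e / 2 < y.
  apply: sup_gt; first by exists (vf 0 x), 0%N.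
  rewrite /ff in ex; lra.
exists n.
  rewrite ltnNge; apply/negP => Nn.
  have h1 := tail_small _ _ _ e0 HN Nn; have h2 := vf_le n x; rewrite mul1r in h2.
  by have := lt_trans (lt_le_trans lt h2) h1; rewrite ltxx.
have := uf_range n (Some x) => /andP [u0 _].
apply: ltW; apply: (lt_le_trans lt); exact: ler_piMr u0 (inv_Sn_le1 n).
Qed.

End exhaustion.


Section rho_metric.
Context {R : realType} {X : topologicalType} (d : X -> X -> R) (f : X -> R).
Hypothesis Hd : compatible_metric d.
Hypothesis fc : continuous f.
Hypothesis fpos : forall x, 0 < f x.

Definition Dm x y := d x y + `|f x - f y|.
Definition rho x y := Num.min (Dm x y) (f x + f y).

Lemma rho_cases x y : (rho x y = Dm x y /\ Dm x y <= f x + f y) \/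
                      (rho x y = f x + f y /\ f x + f y < Dm x y).
Proof.
rewrite /rho; case: (leP (Dm x y) (f x + f y)) => h.
  by left; split => //; rewrite min_l.
by right; split => //; rewrite min_r // ltW.
Qed.

Lemma rho_le_sum x y : rho x y <= f x + f y.
Proof. by rewrite /rho ge_min lexx orbT. Qed.

Lemma rho_le_D x y : rho x y <= Dm x y.
Proof. by rewrite /rho ge_min lexx. Qed.

Lemma d_le_D x y : d x y <= Dm x y.
Proof. by rewrite /Dm lerDl normr_ge0. Qed.

Lemma absf_le_rho x y : `|f x - f y| <= rho x y.
Proof.
rewrite /rho le_min; apply/andP; split.
  by rewrite /Dm lerDr (cm_ge0 _ Hd).
have := fpos x; have := fpos y => hy hx.
rewrite ler_norml; apply/andP; split; lra.
Qed.

Lemma rho_small_D x y : rho x y < f x -> rho x y = Dm x y.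
Proof.
case: (rho_cases x y) => -[-> h] // lt.
by have := fpos y; lra.
Qed.

Lemma rho_is_metric : is_metric rho.
Proof.
split.
- move=> x y; rewrite /rho le_min; apply/andP; split.
    by rewrite /Dm addr_ge0 // (cm_ge0 _ Hd).
  by rewrite addr_ge0 // ltW.
- move=> x y; split => [h|<-].
    case: (rho_cases x y) => -[e1 _].
      move: h; rewrite e1 /Dm => h.
      apply/(cm_eq0 _ Hd); have := cm_ge0 _ Hd x y; have := normr_ge0 (f x - f y).
      lra.
    by exfalso; have := fpos x; have := fpos y; lra.
  rewrite /rho /Dm (cm_xx _ Hd) subrr normr0 addr0 min_l //.
  by rewrite addr_ge0 // ltW.
- by move=> x y; rewrite /rho /Dm (cm_sym _ Hd) distrC [f x + _]addrC.
- move=> x y z.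
  have hxy := absf_le_rho x y; have hyz := absf_le_rho y z.
  have sxz := rho_le_sum x z.
  have ayz := ler_norml (f y - f z) (rho y z).
  have axy := ler_norml (f x - f y) (rho x y).
  rewrite hyz in ayz; rewrite hxy in axy.
  move: ayz axy => /esym/andP [a1 a2] /esym/andP [b1 b2].
  case: (rho_cases x y) => -[e1 l1]; last by lra.
  case: (rho_cases y z) => -[e2 l2]; last by lra.
  apply: (le_trans (rho_le_D x z)); rewrite e1 e2 /Dm.
  have := cm_tri _ Hd x y z; have := ler_distD (f y) (f x) (f z); lra.
Qed.

Lemma rho_compat : compatible_metric rho.
Proof.
split; first exact: rho_is_metric.
move=> A; case: Hd => _ /(_ A) ->; split => H x /H [e e0 eA].
- exists (Num.min e (f x)); first by rewrite lt_min e0 fpos.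
  move=> y; rewrite /dball /= lt_min => /andP [h1 h2].
  apply: eA; rewrite /dball /=.
  apply: (le_lt_trans (d_le_D x y)); by rewrite -rho_small_D.
- have e20 : 0 < e / 2 by rewrite divr_gt0.
  have := fc x; move/cvgrPdist_lt => /(_ _ e20) /(nbhs_dball _ Hd) [del del0 delH].
  exists (Num.min del (e / 2)); first by rewrite lt_min del0 e20.
  move=> y; rewrite /dball /= lt_min => /andP [h1 h2].
  apply: eA; rewrite /dball /=.
  apply: (le_lt_trans (rho_le_D x y)); rewrite /Dm.
  have := delH y h1; rewrite /= => h3; lra.
Qed.

End rho_metric.


Lemma nth_map_prop (T A : Type) (F : T -> A) (x0 : A) (P : A -> Prop) (s : seq T) j :
  P x0 -> (forall q, P (F q)) -> P (nth x0 (map F s) j).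
Proof. by move=> P0 PF; elim: s j => [|a s IH] [|j] //=. Qed.

Section actions.
Context {G : groupType} {X : topologicalType} (phi : G -> X -> X).
Hypothesis Hact : is_action phi.
Local Notation opc := (one_point_compactification X).

Lemma act_inv g x : phi g^-1%g (phi g x) = x.
Proof. by case: Hact => H1 HM; rewrite -HM mulVg H1. Qed.

Lemma ee_ce : expansively_extendible phi -> cocompactly_expansive phi.
Proof.
case=> n [V [[oV covV] expV]].
have [i0 Vi0] := covV None.
exists n, (fun i => Some @^-1` V i), (Some @^-1` (~` V i0)); split.
- split => [i|x]; first exact: opc_open_preimage.
  by have [i Vi] := covV (Some x); exists i.
- apply: opc_compact_preimage; first exact/opc_closed_compact/open_closedC.
  by [].
- move=> x; apply: contrapT => H.
  suff : Some x = None by [].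
  apply: expV => g; exists i0 => z /= [->|->] //=.
  apply: contrapT => ng; apply: H; exists g^-1%g, (phi g x); split => //.
  exact: act_inv.
- move=> x y H.
  suff : Some x = Some y by case.
  apply: expV => g; case: (H g) => [[i Hi]|Hc].
    by exists i => z /= [->|->]; apply: Hi; [left|right].
  exists i0 => z /= [->|->]; apply: contrapT => nV.
    by apply: (Hc (phi g x)); [left|].
  by apply: (Hc (phi g y)); [right|].
Qed.

Hypothesis Hhaus : hausdorff_space X.
Hypothesis Hlc : locally_compact [set: X].

Lemma ce_ee : cocompactly_expansive phi -> expansively_extendible phi.
Proof.
case=> n [U [K [[oU covU] cK GK expU]]].
pose V (i : 'I_n.+1) : set opc :=
  match unlift ord_max i with Some j => Some @` U j | None => ~` (Some @` K) end.
have VE j : V (lift ord_max j) = Some @` U j by rewrite /V liftK.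
have VN : V ord_max = ~` (Some @` K) by rewrite /V unlift_none.
have cSK : closed (Some @` K : set opc).
  apply: compact_closed; first exact: one_point_compactification_hausdorff.
  apply: continuous_compact => //.
  apply: continuous_subspaceT => x.
  exact: one_point_compactification_some_continuous.
exists n.+1, V; split.
  split.
    move=> i; rewrite /V; case: (unlift ord_max i) => [j|].
      exact/one_point_compactification_open_some.
    exact: closed_openC.
  case=> [x|].
    have [j Uj] := covU x; exists (lift ord_max j); rewrite VE; by exists x.
  by exists ord_max; rewrite VN => -[].
have key (a b : X) : (forall g, prec2 V (Some (phi g a)) (Some (phi g b))) -> a = b.
  move=> H; apply: expU => g; case: (H g) => i Hi.
  have [iE|ni] := eqVneq i ord_max.
    right; move: Hi; rewrite iE VN => Hi z [->|->] Kz.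
    + by apply: (Hi (Some (phi g a))); [left|exists (phi g a)].
    + by apply: (Hi (Some (phi g b))); [right|exists (phi g b)].
  have [j ij _] := unlift_some (h:=ord_max) (i:=i) (ltac:(by rewrite eq_sym)).
  left; exists j; move: Hi; rewrite ij VE => Hi z [->|->].
  + by have [w Uw [<-]] := Hi (Some (phi g a)) (or_introl erefl).
  + by have [w Uw [<-]] := Hi (Some (phi g b)) (or_intror erefl).
have noNone (a : X) : ~ (forall g, prec2 V (Some (phi g a)) None).
  move=> H; have [g [k [Kk gka]]] := GK a.
  have [i Hi] := H g^-1%g.
  have [iE|ni] := eqVneq i ord_max.
    move: Hi; rewrite iE VN => Hi.
    apply: (Hi (Some (phi g^-1%g a))); first by left.
    by exists k; rewrite // -gka act_inv.
  have [j ij _] := unlift_some (h:=ord_max) (i:=i) (ltac:(by rewrite eq_sym)).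
  move: Hi; rewrite ij VE => Hi.
  by have [w _] := Hi None (or_intror erefl).
case=> [a|] [b|] H.
- by congr Some; apply: key => g; exact: (H g).
- by exfalso; apply: (noNone a) => g; exact: (H g).
- exfalso; apply: (noNone b) => g; have [i Hi] := H g; exists i.
  by move=> z [->|->]; apply: Hi; [right|left].
- by [].
Qed.

Lemma ce_mie (R : realType) : cocompactly_expansive phi -> MIE R phi.
Proof.
case=> n [U [K [[oU covU] cK GK expU]]] d Hd.
have [del del0 Hdel] : exists2 del : R, 0 < del &
    forall a b, K a -> d a b < del -> exists i, U i a /\ U i b.
  have Hnear : \forall del \near (0:R)^'+, K `<=`
      (fun a => forall b, d a b < del -> exists i, U i a /\ U i b).
    apply: (proj1 (compact_near_coveringP K) cK) => x Kx. have [i Uix] := covU x.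
    have [e e0 eU] := nbhs_dball _ Hd _ _ (open_nbhs_nbhs (conj (oU i) Uix)).
    have e20 : 0 < e / 2 by rewrite divr_gt0.
    exists (dball d x (e / 2), [set del : R | del < e / 2]); first split.
    + exact: dball_nbhs.
    + exact: nbhs_right_lt.
    move=> [x' del] [/= xx' dele] b x'b; exists i; split.
      apply: eU; rewrite /dball /=.
      by apply: (lt_trans xx'); rewrite ltr_pdivrMr // ltr_pMr // ltr1n.
    apply: eU; rewrite /dball /=.
    apply: (le_lt_trans (cm_tri _ Hd x x' b)).
    by rewrite [e](splitr e) ltrD // (lt_trans x'b).
  have [del [del0 Hd']] := filter_ex (filterI (nbhs_right_gt (0:R)) Hnear).
  by exists del => // a b Ka; apply: (Hd' a Ka).
exists (del / 2); first by rewrite divr_gt0.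
move=> x y nxy; apply: contrapT => H; apply: nxy; apply: expU => g.
have dl : d (phi g x) (phi g y) < del.
  have : ~ del / 2 < d (phi g x) (phi g y) by move=> h; apply: H; exists g.
  move/negP; rewrite -leNgt => h; apply: (le_lt_trans h).
  by rewrite ltr_pdivrMr // ltr_pMr // ltr1n.
have [Kx|nKx] := pselect (K (phi g x)).
  have [i [Ui1 Ui2]] := Hdel _ _ Kx dl.
  by left; exists i => z [->|->].
have [Ky|nKy] := pselect (K (phi g y)).
  have dl' : d (phi g y) (phi g x) < del by rewrite (cm_sym _ Hd).
  have [i [Ui1 Ui2]] := Hdel _ _ Ky dl'.
  by left; exists i => z [->|->].
by right => z [->|->].
Qed.

Lemma mie_ce (R : realType) : metrizable R X -> locally_compact [set: X] ->
  sigma_compact X -> MIE R phi -> cocompactly_expansive phi.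
Proof.
move=> [d Hd] Hlc2 [K [cK covK]] Hmie.
have Hh := cm_hausdorff d Hd.
have covK' : forall x, exists n, K n x.
  move=> x; have : (\bigcup_n K n) x by rewrite covK.
  by case=> n _ Kx; exists n.
pose f : X -> R := ff K.
have fc : continuous f := ff_cont K.
have fpos : forall x, 0 < f x := @ff_gt0 R X Hh Hlc2 K cK covK'.
pose rh := rho d f.
have Hrh : compatible_metric rh := rho_compat d f Hd fc fpos.
have [c c0 Hc] := Hmie rh Hrh.
pose fixd y := forall a, phi a y = y.
have [r [r0 rc rfix]] : exists r, [/\ 0 < r, r <= c & forall y, fixd y -> r / 2 <= f y].
  case: (pselect (exists y0, fixd y0 /\ f y0 < c / 4)) => [[y0 [fy0 ly0]]|nex].
    pose m := Num.min (c / 2) (f y0).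
    have m1 : m <= c / 2 by rewrite /m ge_min lexx.
    have m2 : m <= f y0 by rewrite /m ge_min lexx orbT.
    have m0 : 0 < m by rewrite /m lt_min fpos andbT divr_gt0.
    exists m; split => //; first by lra.
    move=> y fy; rewrite leNgt; apply/negP => lty.
    have yy0 : y = y0.
      apply: contrapT => nyy0; have [g hg] := Hc y y0 nyy0.
      rewrite (fy g) (fy0 g) in hg.
      have := rho_le_sum d f y y0; rewrite -/rh; lra.
    by subst y; have := fpos y0; lra.
  exists (c / 2); split => //; first by rewrite divr_gt0.
    by lra.
  move=> y fy; rewrite leNgt; apply/negP => lty.
  by apply: nex; exists y; split => //; lra.
pose C := [set x | r / 2 <= f x].
have r20 : 0 < r / 2 by rewrite divr_gt0.
have cC : compact C := @ff_compact R X Hh Hlc2 K cK _ r20.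
pose B q := dball rh q (r / 2).
have [D' _ HD'] : finite_subset_cover [set: X] (fun q => (Some @` B q : set (one_point_compactification X))) (Some @` C).
  have cSC : compact (Some @` C : set (one_point_compactification X)).
    apply: continuous_compact => //; apply: continuous_subspaceT => x.
    exact: one_point_compactification_some_continuous.
  move: cSC; rewrite compact_cover; apply.
    move=> q _; apply: one_point_compactification_open_some.
    exact: dball_open.
  move=> _ [x Cx <-]; exists x => //; exists x => //.
  by rewrite /B /dball /= (cm_xx _ Hrh).
pose sq := finmap.enum_fset D'.
pose U (i : 'I_(size sq).+1) : set X :=
  if (i : nat) == 0%N then [set x | f x < r / 2] else nth set0 (map B sq) i.-1.
have oU i : open (U i).
  rewrite /U; case: ifP => _.
    exact: (proj1 (continuousP _) fc _ (@open_lt R (r / 2))).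
  apply: nth_map_prop; first exact: open0.
  by move=> q; exact: dball_open.
have smallU i a b : U i a -> U i b -> rh a b < r.
  rewrite /U; case: ifP => _.
    by move=> /= ha hb; have := rho_le_sum d f a b; rewrite -/rh; lra.
  apply: (@nth_map_prop _ _ B set0 (fun S => S a -> S b -> rh a b < r)) => //.
  move=> q; rewrite /B /dball /= => ha hb.
  have := cm_tri _ Hrh a q b; rewrite (cm_sym _ Hrh a q); lra.
have covU x : exists i, U i x.
  case: (pselect (f x < r / 2)) => [lt|nlt].
    by exists ord0.
  have Cx : C x by rewrite /C /= leNgt; apply/negP.
  have [q Dq [y By yx]] := HD' (Some x) (ex_intro2 _ _ x Cx erefl).
  case: yx => yx; subst y.
  have qs : q \in sq by [].
  have qlt : ((index q sq).+1 < (size sq).+1)%N by rewrite ltnS index_mem.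
  exists (Ordinal qlt); rewrite /U /=.
  by rewrite (nth_map q) ?index_mem // nth_index.
exists (size sq).+1, U, C; split => //.
- move=> x; apply: contrapT => H.
  have hf g : f (phi g x) < r / 2.
    rewrite ltNge; apply/negP => Cg; apply: H.
    by exists g^-1%g, (phi g x); split => //; exact: act_inv.
  have fx : fixd x.
    move=> a; apply: contrapT => na.
    have [g hg] := Hc _ _ na.
    case: Hact => _ HM; rewrite -HM in hg.
    have := rho_le_sum d f (phi (g * a)%g x) (phi g x); rewrite -/rh.
    have := hf (g * a)%g; have := hf g; lra.
  have := rfix x fx; have := hf 1%g; case: Hact => H1 _; rewrite H1; lra.
- move=> x y H; apply: contrapT => nxy.
  have [g hg] := Hc x y nxy.
  case: (H g) => [[i Hi]|Hc'].
    have := smallU i (phi g x) (phi g y) (Hi _ (or_introl erefl)) (Hi _ (or_intror erefl)).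
    lra.
  have ha : f (phi g x) < r / 2.
    by rewrite ltNge; apply/negP => Ca; apply: (Hc' _ (or_introl erefl)).
  have hb : f (phi g y) < r / 2.
    by rewrite ltNge; apply/negP => Ca; apply: (Hc' _ (or_intror erefl)).
  have := rho_le_sum d f (phi g x) (phi g y); rewrite -/rh; lra.
Qed.

End actions.

Theorem mainTheorem5 (R : realType) (G : groupType) (X : topologicalType)
  (phi : G -> X -> X) :
  metrizable R X -> locally_compact [set: X] -> sigma_compact X ->
  is_action phi ->
  (MIE R phi <-> expansively_extendible phi) /\
  (expansively_extendible phi <-> cocompactly_expansive phi).
Proof.
move=> Hmet Hlc Hsc Hact.
have [d Hd] := Hmet.
have Hh := cm_hausdorff d Hd.
split; split => H.
- apply: (ce_ee phi Hact Hh Hlc); exact: (mie_ce phi Hact R Hmet Hlc Hsc H).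
- apply: (ce_mie phi R); exact: (ee_ce phi Hact H).
- exact: (ee_ce phi Hact H).
- exact: (ce_ee phi Hact Hh Hlc H).
Qed.
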